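(* For $1\le i\le k$ let $G_i$ be an $r_i$-regular graph with $n_i$ vertices that admits a balanced labelling. Suppose $r_i\le n_j$ for all $1\le i,j\le k$, and that $r=\sum_{i=1}^k r_i$ is coprime to $n_1n_2\cdots n_k$. Then $G_1\Box\cdots\Box G_k$ is $\mathbb{Z}_{n_1\cdots n_k}$-distance antimagic.
   Context: For an $r$-regular graph $G$ with $n$ vertices, a balanced labelling is a bijection $f:V(G)\to\mathbb{Z}_n$ such that $\sum_{y\in N(x)} f(y)\equiv r f(x)\pmod n$ for every vertex $x$ ($N(x)$ the open neighbourhood). The Cartesian product $G_1\Box\cdots\Box G_k$ has vertex set $V(G_1)\times\cdots\times V(G_k)$, with two tuples adjacent iff they differ in exactly one coordinate $i$ and are adjacent there in $G_i$. For a graph $G$ with $n$ vertices, a $\mathbb{Z}_n$-distance antimagic labelling is a bijection $f:V(G)\to\mathbb{Z}_n$ such that the weights $w_f(x)=\sum_{y\in N(x)} f(y)$ (mod $n$) are pairwise distinct; $G$ is $\mathbb{Z}_n$-distance antimagic if such a labelling exists. *)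

(* Defs.v *)
From mathcomp Require Import all_boot.
Set Implicit Arguments. Unset Strict Implicit. Unset Printing Implicit Defensive.

Definition simple_graph (T : finType) (e : rel T) : Prop :=
  symmetric e /\ irreflexive e.

Definition regular (T : finType) (e : rel T) (r : nat) : Prop :=
  forall x : T, #|[pred y | e x y]| = r.

(* Labels in Z_n (n = #|T|) are represented by 'I_n; sums are taken mod n. *)
Definition balanced_labelling (T : finType) (e : rel T) (r : nat)
    (f : T -> 'I_#|T|) : Prop :=
  bijective f /\
  forall x : T, \sum_(y | e x y) (f y : nat) = r * f x %[mod #|T|].

Definition has_balanced_labelling (T : finType) (e : rel T) (r : nat) : Prop :=
  exists f : T -> 'I_#|T|, balanced_labelling e r f.

Definition prod_vertex (k : nat) (T : 'I_k -> finType) : finType :=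
  {dffun forall i : 'I_k, T i}.

Definition prod_adj (k : nat) (T : 'I_k -> finType) (e : forall i, rel (T i))
    : rel (prod_vertex T) :=
  fun x y => [exists i : 'I_k,
                e i (x i) (y i) && [forall j : 'I_k, (j != i) ==> (x j == y j)]].

Definition distance_antimagic_labelling (V : finType) (adj : rel V)
    (f : V -> 'I_#|V|) : Prop :=
  bijective f /\
  injective (fun x : V => (\sum_(y | adj x y) (f y : nat)) %% #|V|).

Definition Zn_distance_antimagic (V : finType) (adj : rel V) : Prop :=
  exists f : V -> 'I_#|V|, distance_antimagic_labelling adj f.

(* Main.v *)
Require Import Defs.
From mathcomp Require Import all_boot zify.
From Stdlib Require Import ClassicalEpsilon.
Set Implicit Arguments. Unset Strict Implicit. Unset Printing Implicit Defensive.

Definition Pw k (T : 'I_k -> finType) (m : nat) : nat :=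
  \prod_(j : 'I_k | j < m) #|T j|.

Definition gl k (T : 'I_k -> finType) (f : forall i, T i -> 'I_#|T i|)
  (x : prod_vertex T) : nat := \sum_(i : 'I_k) Pw T i * f i (x i).

Definition upd k (T : 'I_k -> finType) (x : prod_vertex T) (i : 'I_k) (z : T i)
  : prod_vertex T := [ffun j => dfwith x z j].

Lemma cardV k (T : 'I_k -> finType) : #|prod_vertex T| = \prod_(i < k) #|T i|.
Proof. by rewrite card_dep_ffun foldrE big_map big_enum. Qed.

Lemma cardpos k (T : 'I_k -> finType) (x : prod_vertex T) j : 0 < #|T j|.
Proof. by apply/card_gt0P; exists (x j). Qed.

Lemma Pw_dvdW k (T : 'I_k -> finType) a b : a <= b -> Pw T a %| Pw T b.
Proof.
move=> ab; rewrite /Pw [X in _ %| X](bigID (fun j : 'I_k => j < a)) /=.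
rewrite [X in _ %| X * _](eq_bigl (fun j : 'I_k => j < a)); first exact: dvdn_mulr.
by move=> j /=; apply/andP/idP => [[]//|H]; split=> //; lia.
Qed.

Lemma Pw_dvdN k (T : 'I_k -> finType) a : Pw T a %| \prod_(i < k) #|T i|.
Proof. by rewrite (bigID (fun j : 'I_k => j < a)) /= dvdn_mulr. Qed.

Lemma Pw_S k (T : 'I_k -> finType) m (H : m < k) :
  Pw T m.+1 = Pw T m * #|T (Ordinal H)|.
Proof.
rewrite /Pw (bigD1 (Ordinal H)) //= mulnC; congr (_ * _).
apply: eq_bigl => j /=; rewrite -val_eqE /=; apply/andP/idP => [[]|]; lia.
Qed.

Lemma sum_split3 k (F : 'I_k -> nat) (i0 : 'I_k) :
  \sum_i F i = \sum_(i : 'I_k | i < i0) F i + F i0 + \sum_(i : 'I_k | i0 < i) F i.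
Proof.
rewrite (bigID (fun i : 'I_k => i < i0)) /= [X in _ + X](bigD1 i0) /= ?ltnn //.
rewrite addnA; congr (_ + _); apply: eq_bigl => i /=; rewrite -val_eqE /=.
apply/andP/idP => [[]|]; lia.
Qed.

Lemma cong_add d a b c e : a = b %[mod d] -> c = e %[mod d] -> a + c = b + e %[mod d].
Proof. by move=> H1 H2; rewrite -modnDm H1 H2 modnDm. Qed.

Lemma cong_lemma M u u' a a' b b' p p' : u = u' %[mod M] -> a + b' = a' + b %[mod M] ->
  u + a = p + b -> u' + a' = p' + b' -> p = p' %[mod M].
Proof.
move=> Hu Hab E1 E2.
have F1 : p + (b + a' + b') = u + (a + b') + a' by lia.
have F2 : p' + (b + a' + b') = u' + (a' + b) + a' by lia.
apply/eqP; rewrite -(eqn_modDr (b + a' + b')) F1 F2; apply/eqP.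
by apply: cong_add => //; apply: cong_add.
Qed.

Lemma mod_cancel d r a b : coprime d r -> r * a = r * b %[mod d] -> a = b %[mod d].
Proof.
wlog ba : a b / b <= a => [W|] cop H.
  by case: (leqP b a) => ?; [apply: W|apply/esym; apply: W] => //; lia.
apply/eqP; rewrite eqn_mod_dvd //; move/eqP: H; rewrite eqn_mod_dvd ?leq_mul2l ?ba ?orbT //.
by rewrite -mulnBr Gauss_dvdr.
Qed.

Lemma nbr_sum k (T : 'I_k -> finType) (e : forall i : 'I_k, rel (T i))
  (Hs : forall i, simple_graph (e i)) (x : prod_vertex T) (F : prod_vertex T -> nat) :
  \sum_(y | prod_adj e x y) F y =
  \sum_(i : 'I_k) \sum_(z | e i (x i) z) F (upd x z).
Proof.
pose Q (i : 'I_k) (y : prod_vertex T) := e i (x i) (y i) && [forall j : 'I_k, (j != i) ==> (x j == y j)].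
rewrite big_mkcond /=.
transitivity (\sum_(y : prod_vertex T) \sum_(i : 'I_k | Q i y) F y).
  apply: eq_bigr => y _; case: ifP => [/existsP [i0 Hi0] | Hn].
    rewrite (big_pred1 i0) // => i /=; apply/idP/eqP => [|->//].
    case/andP => He /forallP Hall; case: (eqVneq i i0) => // Hne.
    have := Hall i0; rewrite eq_sym Hne /= => /eqP Exy.
    case/andP: Hi0 => He0 _; move: He0; rewrite Exy.
    by case: (Hs i0) => _ ->.
  rewrite big_pred0 // => i; apply/negP => HQ; move: Hn.
  by rewrite /prod_adj; move/negbT/existsPn => /(_ i); rewrite /Q in HQ; rewrite HQ.
rewrite (exchange_big_dep xpredT) //=; apply: eq_bigr => i _.
rewrite (reindex_onto (fun z : T i => upd x z) (fun y => y i)) /=.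
  apply: eq_bigl => z; rewrite /Q /upd ffunE dfwith_in eqxx andbT.
  have -> : [forall j, (j != i) ==> (x j == [ffun j0 => dfwith x z j0] j)] = true.
    by apply/forallP => j; apply/implyP => Hj; rewrite ffunE dfwith_out // eq_sym.
  by rewrite andbT.
move=> y /andP [_ /forallP Hall]; apply/ffunP => j; rewrite /upd ffunE.
case: (eqVneq i j) => [<-|Hij]; first by rewrite dfwith_in.
rewrite dfwith_out //; apply/eqP; have := Hall j; by rewrite eq_sym Hij.
Qed.

Lemma gl_upd k (T : 'I_k -> finType) (f : forall i, T i -> 'I_#|T i|)
  (x : prod_vertex T) i (z : T i) :
  gl f (upd x z) + Pw T i * f i (x i) = gl f x + Pw T i * f i z.
Proof.
rewrite /gl (bigD1 i) //= [in RHS](bigD1 i) //= /upd ffunE dfwith_in.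
rewrite (eq_bigr (fun j : 'I_k => Pw T j * f j (x j))); first by rewrite addnAC [RHS]addnAC; congr (_ + _); apply: addnC.
by move=> j Hj; rewrite ffunE dfwith_out // eq_sym.
Qed.

Lemma all_coords k (T : 'I_k -> finType) (x y : prod_vertex T) :
  (forall m (H : m < k), (forall j : 'I_k, j < m -> x j = y j) ->
     x (Ordinal H) = y (Ordinal H)) -> x = y.
Proof.
move=> Hstep.
suff S : forall m, m <= k -> forall j : 'I_k, j < m -> x j = y j.
  by apply/ffunP => j; apply: (S k).
elim => [|m IH] Hm j //; rewrite ltnS leq_eqVlt => /orP [/eqP Ej|Hj].
  have -> : j = Ordinal Hm by apply: val_inj.
  by apply: Hstep; apply: IH; apply: ltnW.
by apply: IH => //; apply: ltnW.
Qed.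

Lemma digit k (T : 'I_k -> finType) (f : forall i, T i -> 'I_#|T i|)
  (finj : forall i, injective (f i)) (x y : prod_vertex T) m (H : m < k) :
  (forall j : 'I_k, j < m -> x j = y j) ->
  gl f x = gl f y %[mod Pw T m.+1] -> x (Ordinal H) = y (Ordinal H).
Proof.
move=> Hlt; set i0 := Ordinal H.
have Pp : 0 < Pw T m by apply: prodn_gt0 => j; apply: (cardpos x).
have Hvan : forall z : prod_vertex T,
   (\sum_(i : 'I_k | i0 < i) Pw T i * f i (z i)) %% Pw T m.+1 = 0.
  move=> z; apply/eqP; rewrite -/(dvdn _ _); apply: dvdn_sum => i Hi.
  by apply: dvdn_mulr; apply: Pw_dvdW.
have Heq : \sum_(i : 'I_k | i < i0) Pw T i * f i (x i) =
           \sum_(i : 'I_k | i < i0) Pw T i * f i (y i).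
  by apply: eq_bigr => i Hi; rewrite Hlt.
have Hz : forall z : prod_vertex T, gl f z = \sum_(i : 'I_k | i < i0) Pw T i * f i (z i)
      + Pw T i0 * f i0 (z i0) %[mod Pw T m.+1].
  by move=> z; rewrite /gl (sum_split3 _ i0) -modnDmr Hvan addn0.
rewrite Hz [in X in _ = X -> _]Hz Heq.
move/eqP; rewrite eqn_modDl => /eqP; rewrite (Pw_S T H) -!muln_modr.
move/eqP; rewrite eqn_pmul2l // !modn_small // => /eqP E.
by apply: finj; apply: val_inj.
Qed.

Lemma coord_id k (T : 'I_k -> finType) (e : forall i : 'I_k, rel (T i)) (r : 'I_k -> nat)
  (Hreg : forall i, regular (e i) (r i)) (f : forall i, T i -> 'I_#|T i|)
  (x : prod_vertex T) (i : 'I_k) :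
  \sum_(z | e i (x i) z) gl f (upd x z) + r i * (Pw T i * f i (x i)) =
  r i * gl f x + Pw T i * \sum_(z | e i (x i) z) (f i z : nat).
Proof.
have Hc : forall c, \sum_(z | e i (x i) z) c = r i * c.
  by move=> c; rewrite big_const iter_addn_0 mulnC -(Hreg i (x i)).
rewrite -Hc -big_split /= (eq_bigr _ (fun z _ => gl_upd f x z)) big_split /= Hc.
by congr (_ + _); rewrite big_distrr.
Qed.

Lemma weight_id k (T : 'I_k -> finType) (e : forall i : 'I_k, rel (T i)) (r : 'I_k -> nat)
  (Hs : forall i, simple_graph (e i))
  (Hreg : forall i, regular (e i) (r i)) (f : forall i, T i -> 'I_#|T i|)
  (x : prod_vertex T) :
  \sum_(y | prod_adj e x y) gl f y + \sum_(i : 'I_k) r i * (Pw T i * f i (x i)) =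
  (\sum_(i : 'I_k) r i) * gl f x + \sum_(i : 'I_k) Pw T i * \sum_(z | e i (x i) z) (f i z : nat).
Proof.
rewrite nbr_sum // -big_split /= (eq_bigr _ (fun i _ => coord_id Hreg f x i)).
by rewrite big_split /= big_distrl.
Qed.

Lemma sum_cong (I : Type) (s : seq I) (P : pred I) (F G : I -> nat) d :
  (forall i, P i -> F i = G i %[mod d]) ->
  \sum_(i <- s | P i) F i = \sum_(i <- s | P i) G i %[mod d].
Proof.
move=> H; apply: (big_ind2 (fun a b => a = b %[mod d])) => //.
exact: cong_add.
Qed.

Theorem mainTheorem12 (k : nat) (T : 'I_k -> finType)
    (e : forall i : 'I_k, rel (T i)) (r : 'I_k -> nat) :
  0 < k ->
  (forall i, simple_graph (e i)) ->
  (forall i, regular (e i) (r i)) ->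
  (forall i, has_balanced_labelling (e i) (r i)) ->
  (forall i j : 'I_k, r i <= #|T j|) ->
  coprime (\sum_(i < k) r i) (\prod_(i < k) #|T i|) ->
  Zn_distance_antimagic (prod_adj e).
Proof.
move=> k0 Hs Hreg Hb Hrn Hcop.
have Hf : forall i, {f : T i -> 'I_#|T i| | balanced_labelling (e i) (r i) f}.
  by move=> i; apply: constructive_indefinite_description; apply: Hb.
pose f i := sval (Hf i).
have fbal : forall i, balanced_labelling (e i) (r i) (f i) := fun i => svalP (Hf i).
have finj : forall i, injective (f i) by move=> i; case: (fbal i) => /bij_inj.
have Vpos : forall y : prod_vertex T, 0 < #|prod_vertex T|.
  by move=> y; apply/card_gt0P; exists y.
pose lab (y : prod_vertex T) : 'I_#|prod_vertex T| :=
  Ordinal (ltn_pmod (gl f y) (Vpos y)).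
exists lab.
have Hdvd : forall m, Pw T m %| #|prod_vertex T|.
  by move=> m; rewrite cardV Pw_dvdN.
have Hmain : forall x y : prod_vertex T,
   (forall m (H : m < k), (forall j : 'I_k, j < m -> x j = y j) ->
       gl f x = gl f y %[mod Pw T m.+1]) -> x = y.
  move=> x y H; apply: all_coords => m Hm Hlt; apply: digit => //; exact: H.
have labinj : injective lab.
  move=> x y /(congr1 val) /= E; apply: Hmain => m Hm _.
  by rewrite -(modn_dvdm (gl f x) (Hdvd m.+1)) E (modn_dvdm _ (Hdvd m.+1)).
split; first by apply: inj_card_bij => //; rewrite card_ord.
move=> x y /= Ew; apply: Hmain => m Hm Hlt.
rewrite !modn_summ in Ew.
have Ew' := congr1 (modn^~ (Pw T m.+1)) Ew; rewrite /= !(modn_dvdm _ (Hdvd m.+1)) in Ew'.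
apply: (@mod_cancel _ (\sum_(i < k) r i)).
  rewrite coprime_sym; apply: coprime_dvdr Hcop; rewrite -cardV; exact: Hdvd.
apply: (cong_lemma Ew' _ (weight_id Hs Hreg f x) (weight_id Hs Hreg f y)).
rewrite -!big_split /=; apply: sum_cong => i _.
case: (ltngtP i m) => Him.
- by rewrite (Hlt i Him).
- have D : Pw T m.+1 %| Pw T i by apply: Pw_dvdW.
  have Z : forall a b : nat, (r i * (Pw T i * a) + Pw T i * b) %% Pw T m.+1 = 0.
    move=> a b; apply/eqP; rewrite -/(dvdn _ _) dvdn_add //.
      by apply: dvdn_mull; apply: dvdn_mulr.
    by apply: dvdn_mulr.
  by rewrite !Z.
- have Ei : i = Ordinal Hm by apply: val_inj.
  have HM : Pw T m.+1 = Pw T i * #|T i| by rewrite (Pw_S T Hm) -Ei -Him.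
  have Hz : forall z : prod_vertex T,
     r i * (Pw T i * f i (z i)) = Pw T i * \sum_(w | e i (z i) w) (f i w : nat)
        %[mod Pw T m.+1].
    move=> z; rewrite HM mulnCA -!muln_modr; congr (_ * _).
    by case: (fbal i) => _ ->.
  by rewrite [in RHS]addnC; apply: cong_add => //; apply/esym.
Qed.
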